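(* Let $(X,\to)$ be a transition system over an alphabet $A$ and let $R_0\subseteq X\times X$ be a preorder. Consider the map $\beta_{R_0}\colon \mathit{Eq}(\mathcal P(X))\to\mathit{Eq}(\mathcal P(X))$, $\beta_{R_0}(R)=\beta_t(R)\cap (R_0)_H$. Then the least fixpoint $\mu\,\beta_{R_0}$ of $\beta_{R_0}$ in the complete lattice $(\mathit{Eq}(\mathcal P(X)),\supseteq)$ equals the set $\Omega(R_0)$ of all pairs $(X_1,X_2)$ of subsets of $X$ such that: whenever $x_1\in X_1$ and $x_1\xrightarrow{\sigma}x_1'$ for some $\sigma\in A^*$, there is $x_2\in X_2$ with $x_2\xrightarrow{\sigma}x_2'$ and $x_1'\mathrel{R_0}x_2'$; and, symmetrically, whenever $x_2\in X_2$ and $x_2\xrightarrow{\sigma}x_2'$, there is $x_1\in X_1$ with $x_1\xrightarrow{\sigma}x_1'$ and $x_2'\mathrel{R_0}x_1'$.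
   Context: A transition system over $A$ is a pair $(X,\to)$ with $\to\subseteq X\times A\times X$; write $x\xrightarrow{a}x'$ for $(x,a,x')\in\to$, $\delta_a(x)=\{x'\mid x\xrightarrow{a}x'\}$, and for $Y\subseteq X$, $\delta_a[Y]=\bigcup_{y\in Y}\delta_a(y)$. For $\sigma=a_1\cdots a_n\in A^*$, $x\xrightarrow{\sigma}x'$ means $x\xrightarrow{a_1}\cdots\xrightarrow{a_n}x'$ (for the empty word, $x'=x$). $\mathit{Eq}(\mathcal P(X))$ is the set of equivalence relations on $\mathcal P(X)$. For $R\subseteq X\times X$, define $R_{\overrightarrow H}\subseteq\mathcal P(X)\times\mathcal P(X)$ by $X_1\mathrel{R_{\overrightarrow H}}X_2$ iff $\forall x_1\in X_1\,\exists x_2\in X_2\colon x_1\mathrel R x_2$, and $R_H=R_{\overrightarrow H}\cap(R_{\overrightarrow H})^{-1}$. For $S\subseteq X$ and $a\in A$, $\Diamond_a(S)=\{x\mid\exists x'\in S\colon x\xrightarrow{a}x'\}$. Define $\alpha_t\colon\mathcal P(\mathcal P(X))\to\mathit{Eq}(\mathcal P(X))$, $\alpha_t(\mathcal S)=\{(X_1,X_2)\mid\forall S\in\mathcal S\colon(X_1\cap S\neq\emptyset\iff X_2\cap S\neq\emptyset)\}$; $\gamma_t\colon\mathit{Eq}(\mathcal P(X))\to\mathcal P(\mathcal P(X))$, $\gamma_t(R)=\{S\subseteq X\mid\forall(X_1,X_2)\in R\colon(X_1\cap S\neq\emptyset\iff X_2\cap S\neq\emptyset)\}$; $\mathit{lo}_t(\mathcal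 S)=\bigcup_{a\in A}\{\Diamond_a(S)\mid S\in\mathcal S\}\cup\{X\}$; and $\beta_t=\alpha_t\circ\mathit{lo}_t\circ\gamma_t$. *)

(* Defs.v *)
From Stdlib Require Import List.
Import ListNotations.
Set Implicit Arguments.

Section TS.
Variables (X A : Type) (step : X -> A -> X -> Prop).

Fixpoint steps (x : X) (sigma : list A) (x' : X) : Prop :=
  match sigma with
  | [] => x' = x
  | a :: s => exists y, step x a y /\ steps y s x'
  end.

Definition pset := X -> Prop.
Definition prel := pset -> pset -> Prop.

Definition is_equiv (R : prel) : Prop :=
  (forall S, R S S) /\ (forall S T, R S T -> R T S) /\
  (forall S T U, R S T -> R T U -> R S U).

Definition meets (Y S : pset) : Prop := exists x, Y x /\ S x.

Definition R_Hright (R0 : X -> X -> Prop) : prel :=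
  fun X1 X2 => forall x1, X1 x1 -> exists x2, X2 x2 /\ R0 x1 x2.

Definition R_H (R0 : X -> X -> Prop) : prel :=
  fun X1 X2 => R_Hright R0 X1 X2 /\ R_Hright R0 X2 X1.

Definition Diamond (a : A) (S : pset) : pset :=
  fun x => exists x', S x' /\ step x a x'.

Definition alpha_t (F : pset -> Prop) : prel :=
  fun X1 X2 => forall S, F S -> (meets X1 S <-> meets X2 S).

Definition gamma_t (R : prel) : pset -> Prop :=
  fun S => forall X1 X2, R X1 X2 -> (meets X1 S <-> meets X2 S).

Definition lo_t (F : pset -> Prop) : pset -> Prop :=
  fun T => (exists a S, F S /\ T = Diamond a S) \/ T = (fun _ => True).

Definition beta_t (R : prel) : prel := alpha_t (lo_t (gamma_t R)).

Definition beta_R0 (R0 : X -> X -> Prop) (R : prel) : prel :=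
  fun X1 X2 => beta_t R X1 X2 /\ R_H R0 X1 X2.

Definition Omega (R0 : X -> X -> Prop) : prel :=
  fun X1 X2 =>
    (forall x1 sigma x1', X1 x1 -> steps x1 sigma x1' ->
       exists x2 x2', X2 x2 /\ steps x2 sigma x2' /\ R0 x1' x2') /\
    (forall x2 sigma x2', X2 x2 -> steps x2 sigma x2' ->
       exists x1 x1', X1 x1 /\ steps x1 sigma x1' /\ R0 x2' x1').

(* least fixpoint of f in the complete lattice (Eq(P(X)), ⊇):
   an equivalence fixpoint that is ⊇ every equivalence fixpoint *)
Definition is_lfp_supseteq (f : prel -> prel) (M : prel) : Prop :=
  is_equiv M /\ f M = M /\
  forall R, is_equiv R -> f R = R -> forall X1 X2, R X1 X2 -> M X1 X2.

End TS.

(* Main.v *)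
Require Import Defs.
From Stdlib Require Import List FunctionalExtensionality PropExtensionality.
Import ListNotations.

Fixpoint DiamS {X A : Type} (step : X -> A -> X -> Prop) (s : list A) (U : X -> Prop) : X -> Prop :=
  match s with
  | [] => U
  | a :: s' => Diamond step a (DiamS step s' U)
  end.

Lemma diamS_spec (X A : Type) (step : X -> A -> X -> Prop) s U x :
  DiamS step s U x <-> exists x', steps step x s x' /\ U x'.
Proof.
  revert x; induction s as [|a s IH]; intros x; simpl.
  - split; [intros H; exists x; auto | intros [x' [-> H]]; auto].
  - unfold Diamond; split.
    + intros [y [Hy Hs]]. apply IH in Hy. destruct Hy as [x' [H1 H2]].
      exists x'; split; auto. exists y; auto.
    + intros [x' [[y [Hs H1]] H2]]. exists y; split; auto. apply IH; eauto.
Qed.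

Theorem mainTheorem1 (X A : Type) (step : X -> A -> X -> Prop)
  (R0 : X -> X -> Prop)
  (R0_refl : forall x, R0 x x)
  (R0_trans : forall x y z, R0 x y -> R0 y z -> R0 x z) :
  is_lfp_supseteq (beta_R0 step R0) (Omega step R0).
Proof.
  assert (gO : forall s x', gamma_t (Omega step R0) (DiamS step s (fun y => R0 x' y))).
  { intros s x' Y1 Y2 [H1 H2]; split; intros [y [Hy HS]];
      apply diamS_spec in HS; destruct HS as [z [Hz Hr]].
    - destruct (H1 _ _ _ Hy Hz) as (y2 & z2 & Hy2 & Hz2 & Hr2).
      exists y2; split; auto. apply diamS_spec; exists z2; split; eauto.
    - destruct (H2 _ _ _ Hy Hz) as (y2 & z2 & Hy2 & Hz2 & Hr2).
      exists y2; split; auto. apply diamS_spec; exists z2; split; eauto. }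
  unfold is_lfp_supseteq; split; [|split].
  - unfold is_equiv; split; [|split].
    + intros S; split; intros x1 s x1' H1 H2; exists x1, x1'; auto.
    + intros S T [H1 H2]; split; auto.
    + intros S T U [H1 H2] [H3 H4]; split.
      * intros x1 s x1' Hx Hs. destruct (H1 _ _ _ Hx Hs) as (y & y' & Hy & Hy' & Hr).
        destruct (H3 _ _ _ Hy Hy') as (z & z' & Hz & Hz' & Hr').
        exists z, z'; eauto.
      * intros x1 s x1' Hx Hs. destruct (H4 _ _ _ Hx Hs) as (y & y' & Hy & Hy' & Hr).
        destruct (H2 _ _ _ Hy Hy') as (z & z' & Hz & Hz' & Hr').
        exists z, z'; eauto.
  - extensionality X1; extensionality X2; apply propositional_extensionality; split.
    + intros [Hb [Hh1 Hh2]]. split.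
      * intros x1 [|a s] x1' Hx Hs; simpl in Hs.
        -- subst. destruct (Hh1 _ Hx) as [x2 [Hx2 Hr]]. exists x2, x2; simpl; auto.
        -- destruct Hs as [y [Hy Hs]].
           assert (Hm : meets X1 (Diamond step a (DiamS step s (fun z => R0 x1' z)))).
           { exists x1; split; auto. exists y; split; auto. apply diamS_spec; eauto. }
           apply (Hb (Diamond step a (DiamS step s (fun z => R0 x1' z)))) in Hm.
           ++ destruct Hm as [x2 [Hx2 [y2 [Hy2 Hst]]]].
              apply diamS_spec in Hy2. destruct Hy2 as [z [Hz Hr]].
              exists x2, z; simpl; split; auto. split; auto. exists y2; auto.
           ++ left. exists a, (DiamS step s (fun z => R0 x1' z)); auto.
      * intros x1 [|a s] x1' Hx Hs; simpl in Hs.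
        -- subst. destruct (Hh2 _ Hx) as [x2 [Hx2 Hr]]. exists x2, x2; simpl; auto.
        -- destruct Hs as [y [Hy Hs]].
           assert (Hm : meets X2 (Diamond step a (DiamS step s (fun z => R0 x1' z)))).
           { exists x1; split; auto. exists y; split; auto. apply diamS_spec; eauto. }
           apply (Hb (Diamond step a (DiamS step s (fun z => R0 x1' z)))) in Hm.
           ++ destruct Hm as [x2 [Hx2 [y2 [Hy2 Hst]]]].
              apply diamS_spec in Hy2. destruct Hy2 as [z [Hz Hr]].
              exists x2, z; simpl; split; auto. split; auto. exists y2; auto.
           ++ left. exists a, (DiamS step s (fun z => R0 x1' z)); auto.
    + intros [H1 H2]. split.
      * intros T [[a [S [HS ->]]] | ->].
        -- split.
           ++ intros [x1 [Hx [y1 [Hy1 Hst]]]].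
              set (Y2 := fun y => exists x2, X2 x2 /\ step x2 a y).
              assert (HO : Omega step R0 (fun y => y = y1 \/ Y2 y) Y2).
              { split.
                - intros y s y' [->|Hy] Hs.
                  + destruct (H1 x1 (a :: s) y' Hx) as (x2 & x2' & Hx2 & Hs2 & Hr).
                    { simpl; exists y1; auto. }
                    simpl in Hs2. destruct Hs2 as [w [Hw Hs2]].
                    exists w, x2'; split; [exists x2; auto | auto].
                  + exists y, y'; auto.
                - intros y s y' Hy Hs. exists y, y'; auto. }
              assert (Hm : meets (fun y => y = y1 \/ Y2 y) S) by (exists y1; auto).
              apply (HS _ _ HO) in Hm. destruct Hm as [y2 [[x2 [Hx2 Hst2]] HS2]].
              exists x2; split; auto. exists y2; auto.
           ++ intros [x1 [Hx [y1 [Hy1 Hst]]]].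
              set (Y2 := fun y => exists x2, X1 x2 /\ step x2 a y).
              assert (HO : Omega step R0 (fun y => y = y1 \/ Y2 y) Y2).
              { split.
                - intros y s y' [->|Hy] Hs.
                  + destruct (H2 x1 (a :: s) y' Hx) as (x2 & x2' & Hx2 & Hs2 & Hr).
                    { simpl; exists y1; auto. }
                    simpl in Hs2. destruct Hs2 as [w [Hw Hs2]].
                    exists w, x2'; split; [exists x2; auto | auto].
                  + exists y, y'; auto.
                - intros y s y' Hy Hs. exists y, y'; auto. }
              assert (Hm : meets (fun y => y = y1 \/ Y2 y) S) by (exists y1; auto).
              apply (HS _ _ HO) in Hm. destruct Hm as [y2 [[x2 [Hx2 Hst2]] HS2]].
              exists x2; split; auto. exists y2; auto.
        -- split.
           ++ intros [x1 [Hx _]]. destruct (H1 x1 [] x1 Hx eq_refl) as (x2 & _ & Hx2 & _).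
              exists x2; auto.
           ++ intros [x1 [Hx _]]. destruct (H2 x1 [] x1 Hx eq_refl) as (x2 & _ & Hx2 & _).
              exists x2; auto.
      * split.
        -- intros x1 Hx. destruct (H1 x1 [] x1 Hx eq_refl) as (x2 & x2' & Hx2 & Hs & Hr).
           simpl in Hs; subst; eauto.
        -- intros x1 Hx. destruct (H2 x1 [] x1 Hx eq_refl) as (x2 & x2' & Hx2 & Hs & Hr).
           simpl in Hs; subst; eauto.
  - intros R [_ [Rsym _]] HR.
    assert (HB : forall X1 X2, R X1 X2 -> beta_R0 step R0 R X1 X2) by (intros; rewrite HR; auto).
    assert (gR : forall s x', gamma_t R (DiamS step s (fun y => R0 x' y))).
    { induction s as [|a s IH]; intros x' Y1 Y2 HY; simpl.
      - destruct (HB _ _ HY) as [_ [Hh1 Hh2]]. split; intros [y [Hy Hu]].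
        + destruct (Hh1 _ Hy) as [y2 [Hy2 Hr]]. exists y2; eauto.
        + destruct (Hh2 _ Hy) as [y2 [Hy2 Hr]]. exists y2; eauto.
      - destruct (HB _ _ HY) as [Hb _]. apply Hb.
        left. exists a, (DiamS step s (fun y => R0 x' y)); auto. }
    assert (key : forall X1 X2, R X1 X2 -> forall x1 s x1', X1 x1 -> steps step x1 s x1' ->
       exists x2 x2', X2 x2 /\ steps step x2 s x2' /\ R0 x1' x2').
    { intros X1 X2 HX x1 s x1' Hx Hs.
      assert (Hm : meets X1 (DiamS step s (fun y => R0 x1' y))).
      { exists x1; split; auto. apply diamS_spec; eauto. }
      apply (gR s x1' _ _ HX) in Hm. destruct Hm as [x2 [Hx2 Hd]].
      apply diamS_spec in Hd. destruct Hd as [z [Hz Hr]]. exists x2, z; auto. }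
    intros X1 X2 HX; split; [apply (key _ _ HX) | apply (key _ _ (Rsym _ _ HX))].
Qed.
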